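(* Let $\Bbbk$ be a field, $H$ a Hopf $\Bbbk$-algebra with bijective antipode, and $A$ a left $H$-module $\Bbbk$-algebra. For $q\in\operatorname{Q} A$ let $D_q=\{ a \in A \mid qAa \subseteq A \text{ and } aAq \subseteq A \}$, and define \[ \operatorname{Q}^H A = \{ q \in \operatorname{Q} A \mid h.(dq) = (h.d)q \text{ and } h.(qd) = q(h.d) \text{ for all } h \in H,\ d \in D_q \}. \] Let $\mathscr{E}^H$ be the set of two-sided ideals of $A$ that are $H$-submodules and have zero left and right annihilator in $A$. Then: (a) $D_q \in \mathscr{E}^H$ for every $q \in \operatorname{Q}^H A$. (b) Let $q \in \operatorname{Q} A$. If there is some $I \in \mathscr{E}^H$ with $I \subseteq D_q$ such that $h.(aq) = (h.a)q$ and $h.(qa) = q(h.a)$ for all $h \in H$ and $a \in I$, then $q \in \operatorname{Q}^H A$. (c) $\operatorname{Q}^H A$ is a subalgebra of $\operatorname{Q} A$, and $A^H \subseteq \operatorname{Q}^H A$, where $A^H=\{a\in A \mid h.a=\varepsilon(h)a \ \forall h\in H\}$.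
   Context: A left $H$-module algebra is a $\Bbbk$-algebra $A$ with $1$ that is a left $H$-module via $h\otimes a\mapsto h.a$ such that $h.(ab)=(h_1.a)(h_2.b)$ (Sweedler notation $\Delta h=h_1\otimes h_2$) and $h.1=\varepsilon(h)1$, where $\varepsilon$ is the counit of $H$. $\operatorname{Q} A$ denotes the symmetric (Martindale) ring of quotients of $A$; $A$ is a subring of $\operatorname{Q} A$, and for $q \in \operatorname{Q} A$ the set $D_q$ is a two-sided ideal of $A$ with zero left and right annihilator. *)

(* Defs.v *)
From HB Require Import structures.
From mathcomp Require Import all_boot all_order all_algebra.
Set Implicit Arguments. Unset Strict Implicit. Unset Printing Implicit Defensive.
Import GRing.Theory.
Local Open Scope ring_scope.

Section HopfDefs.
Variables (k : fieldType) (H : algType k).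

(* A finite list s of pairs represents the element sum_(p in s) p.1 (x) p.2
   of H (x) H.  Two such representatives denote the same tensor iff they have
   the same image under every k-bilinear map into every k-vector space
   (universal property of the tensor product). *)
Definition bilinear_map (V : lmodType k) (phi : H -> H -> V) : Prop :=
  (forall y (c : k) x1 x2, phi (c *: x1 + x2) y = c *: phi x1 y + phi x2 y) /\
  (forall x (c : k) y1 y2, phi x (c *: y1 + y2) = c *: phi x y1 + phi x y2).

Definition trilinear_map (V : lmodType k) (phi : H -> H -> H -> V) : Prop :=
  [/\ (forall y z (c : k) x1 x2,
         phi (c *: x1 + x2) y z = c *: phi x1 y z + phi x2 y z),
      (forall x z (c : k) y1 y2,
         phi x (c *: y1 + y2) z = c *: phi x y1 z + phi x y2 z) &
      (forall x y (c : k) z1 z2,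
         phi x y (c *: z1 + z2) = c *: phi x y z1 + phi x y z2)].

Definition teq2 (s t : seq (H * H)) : Prop :=
  forall (V : lmodType k) (phi : H -> H -> V), bilinear_map phi ->
    \sum_(p <- s) phi p.1 p.2 = \sum_(p <- t) phi p.1 p.2.

Definition teq3 (s t : seq (H * H * H)) : Prop :=
  forall (V : lmodType k) (phi : H -> H -> H -> V), trilinear_map phi ->
    \sum_(p <- s) phi p.1.1 p.1.2 p.2 = \sum_(p <- t) phi p.1.1 p.1.2 p.2.

(* (H, cop, eps, S) is a Hopf algebra over k; cop h is a representative of
   Delta h in Sweedler form: Delta h = sum_(p <- cop h) p.1 (x) p.2. *)
Definition is_hopf_algebra (cop : H -> seq (H * H)) (eps : H -> k)
    (S : H -> H) : Prop :=
  [/\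
      (forall (c : k) x y,
         teq2 (cop (c *: x + y)) ([seq (c *: p.1, p.2) | p <- cop x] ++ cop y)),
      (forall x y, teq2 (cop (x * y))
                        [seq (p.1 * r.1, p.2 * r.2) | p <- cop x, r <- cop y])
      /\ teq2 (cop 1) [:: (1, 1)],
      (forall h, teq3 [seq (r.1, r.2, p.2) | p <- cop h, r <- cop p.1]
                      [seq (p.1, r.1, r.2) | p <- cop h, r <- cop p.2]),
      [/\ (forall (c : k) x y, eps (c *: x + y) = c * eps x + eps y),
          (forall x y, eps (x * y) = eps x * eps y), eps 1 = 1,
          (forall h, \sum_(p <- cop h) eps p.1 *: p.2 = h) &
          (forall h, \sum_(p <- cop h) eps p.2 *: p.1 = h)] &
      [/\ (forall (c : k) x y, S (c *: x + y) = c *: S x + S y),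
          (forall h, \sum_(p <- cop h) S p.1 * p.2 = eps h *: 1) &
          (forall h, \sum_(p <- cop h) p.1 * S p.2 = eps h *: 1)]].

End HopfDefs.

Section ModuleAlgebra.
Variables (k : fieldType) (H : algType k) (A : algType k).

Definition is_module_algebra (cop : H -> seq (H * H)) (eps : H -> k)
    (act : H -> A -> A) : Prop :=
  [/\ (forall a (c : k) g h, act (c *: g + h) a = c *: act g a + act h a),
      (forall h (c : k) a b, act h (c *: a + b) = c *: act h a + act h b),
      (forall a, act 1 a = a) /\ (forall g h a, act (g * h) a = act g (act h a)),
      (forall h a b, act h (a * b) = \sum_(p <- cop h) act p.1 a * act p.2 b) &
      (forall h, act h 1 = eps h *: 1)].

Definition is_twosided_ideal (I : A -> Prop) : Prop :=
  [/\ I 0, (forall x y, I x -> I y -> I (x + y)) &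
      (forall a x, I x -> I (a * x) /\ I (x * a))].

Definition zero_lann (I : A -> Prop) : Prop :=
  forall a, (forall x, I x -> a * x = 0) -> a = 0.
Definition zero_rann (I : A -> Prop) : Prop :=
  forall a, (forall x, I x -> x * a = 0) -> a = 0.

Definition dense_ideal (I : A -> Prop) : Prop :=
  [/\ is_twosided_ideal I, zero_lann I & zero_rann I].

Definition H_stable (act : H -> A -> A) (I : A -> Prop) : Prop :=
  forall h x, I x -> I (act h x).

Definition EH (act : H -> A -> A) (I : A -> Prop) : Prop :=
  dense_ideal I /\ H_stable act I.

Definition invariants (eps : H -> k) (act : H -> A -> A) (a : A) : Prop :=
  forall h, act h a = eps h *: a.

End ModuleAlgebra.

Section Quotients.
Variables (k : fieldType) (A Q : algType k) (iota : {lrmorphism A -> Q}).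

Definition inA (q : Q) : Prop := exists a, iota a = q.

(* (Q, iota) is the symmetric Martindale ring of quotients of A (with respect
   to the filter of ideals with zero left and right annihilators),
   characterised up to isomorphism over A by the usual four properties. *)
Definition is_sym_ring_of_quotients : Prop :=
  [/\ injective iota,
      (forall q : Q, exists I, dense_ideal I /\
         (forall x, I x -> inA (iota x * q) /\ inA (q * iota x))),
      (forall (q : Q) I, dense_ideal I ->
         ((forall x, I x -> iota x * q = 0) \/ (forall x, I x -> q * iota x = 0))
         -> q = 0) &
      (forall I (f g : A -> A), dense_ideal I ->
         (forall x y, I x -> I y -> f (x + y) = f x + f y) ->
         (forall a x, I x -> f (a * x) = a * f x) ->
         (forall x y, I x -> I y -> g (x + y) = g x + g y) ->
         (forall a x, I x -> g (x * a) = g x * a) ->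
         (forall x y, I x -> I y -> f x * y = x * g y) ->
         exists q : Q, forall x, I x -> iota x * q = iota (f x) /\
                                        q * iota x = iota (g x))].

Definition Dq (q : Q) (a : A) : Prop :=
  forall b, inA (q * iota b * iota a) /\ inA (iota a * iota b * q).

Variables (H : algType k) (act : H -> A -> A).

(* Q^H A: h.(dq) = (h.d)q and h.(qd) = q(h.d) for h in H, d in D_q
   (dq and qd lie in A for d in D_q; x denotes the element of A they equal) *)
Definition QH (q : Q) : Prop :=
  forall h d, Dq q d ->
    (forall x, iota x = iota d * q -> iota (act h x) = iota (act h d) * q) /\
    (forall x, iota x = q * iota d -> iota (act h x) = q * iota (act h d)).

Definition is_subalgebra (S : Q -> Prop) : Prop :=
  [/\ S 1, (forall p q, S p -> S q -> S (p + q)),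
      (forall p q, S p -> S q -> S (p * q)) &
      (forall (c : k) q, S q -> S (c *: q))].

End Quotients.

(* Main.v *)
Require Import Defs.
From HB Require Import structures.
From mathcomp Require Import all_boot all_order all_algebra.
Import GRing.Theory.
Local Open Scope ring_scope.

Definition islin {k : fieldType} {U V : lmodType k} (f : U -> V) :=
  forall (c : k) x y, f (c *: x + y) = c *: f x + f y.
Section Lin.
Variable k : fieldType.
Variables (U V : lmodType k) (f : U -> V).
Hypothesis hf : islin f.
Lemma lin0 : f 0 = 0.
Proof.
have := hf 1 0 0; rewrite !scale1r addr0 => /(congr1 (fun v => v - f 0)).
by rewrite subrr addrK => <-.
Qed.
Lemma linD x y : f (x + y) = f x + f y.
Proof. by have := hf 1 x y; rewrite !scale1r. Qed.
Lemma linZ c x : f (c *: x) = c *: f x.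
Proof. by have := hf c x 0; rewrite !addr0 lin0 addr0. Qed.
Lemma lin_sum (I : Type) (r : seq I) (F : I -> U) :
  f (\sum_(i <- r) F i) = \sum_(i <- r) f (F i).
Proof.
elim: r => [|i r IH]; first by rewrite !big_nil lin0.
by rewrite !big_cons linD IH.
Qed.
End Lin.
Arguments lin0 {k U V f}.
Arguments linD {k U V f}.
Arguments linZ {k U V f}.
Arguments lin_sum {k U V f}.

Lemma islin_sum (k : fieldType) (U V : lmodType k) (I : Type) (r : seq I)
   (G : I -> U -> V) : (forall i, islin (G i)) ->
   islin (fun x => \sum_(i <- r) G i x).
Proof.
move=> hG c x y; rewrite scaler_sumr -big_split /=.
by apply: eq_bigr => i _; rewrite hG.
Qed.

Lemma gislinMl (k : fieldType) (B : algType k) (V : lmodType k) (f : V -> B) v :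
  islin f -> islin (fun x => f x * v).
Proof. by move=> hf c x y; rewrite hf mulrDl scalerAl. Qed.
Lemma gislinMr (k : fieldType) (B : algType k) (V : lmodType k) (f : V -> B) v :
  islin f -> islin (fun x => v * f x).
Proof. by move=> hf c x y; rewrite hf mulrDr scalerAr. Qed.

Section Hopf.
Variables (k : fieldType) (H : algType k) (cop : H -> seq (H * H))
  (eps : H -> k) (S : H -> H).
Hypothesis hH : is_hopf_algebra cop eps S.
Hypothesis hS : bijective S.

Lemma bil_of (V : lmodType k) (phi : H -> H -> V) :
  (forall y, islin (phi^~ y)) -> (forall x, islin (phi x)) -> bilinear_map phi.
Proof. by move=> h1 h2; split=> *; [apply: h1 | apply: h2]. Qed.

Lemma tril_of (V : lmodType k) (phi : H -> H -> H -> V) :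
  (forall y z, islin (fun x => phi x y z)) ->
  (forall x z, islin (fun y => phi x y z)) ->
  (forall x y, islin (phi x y)) -> trilinear_map phi.
Proof. by move=> h1 h2 h3; split=> *; [apply: h1 | apply: h2 | apply: h3]. Qed.

Lemma coassoc h (V : lmodType k) (phi : H -> H -> H -> V) : trilinear_map phi ->
  \sum_(p <- cop h) \sum_(r <- cop p.1) phi r.1 r.2 p.2 =
  \sum_(p <- cop h) \sum_(r <- cop p.2) phi p.1 r.1 r.2.
Proof.
case: hH => _ _ hc _ _ tp.
have := hc h V phi tp; by rewrite !big_allpairs_dep.
Qed.

Lemma copM x y (V : lmodType k) (phi : H -> H -> V) : bilinear_map phi ->
  \sum_(u <- cop (x * y)) phi u.1 u.2 =
  \sum_(p <- cop x) \sum_(r <- cop y) phi (p.1 * r.1) (p.2 * r.2).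
Proof.
case: hH => _ [hm _] _ _ _ bp.
by rewrite (hm x y V phi bp) big_allpairs_dep.
Qed.

Lemma cop1 (V : lmodType k) (phi : H -> H -> V) : bilinear_map phi ->
  \sum_(u <- cop 1) phi u.1 u.2 = phi 1 1.
Proof. case: hH => _ [_ h1] _ _ _ bp. by rewrite (h1 V phi bp) big_seq1. Qed.

Lemma Slin : islin S. Proof. by case: hH => _ _ _ _ []. Qed.
Lemma epsD c x y : eps (c *: x + y) = c * eps x + eps y.
Proof. by case: hH => _ _ _ [] . Qed.
Lemma epsM x y : eps (x * y) = eps x * eps y.
Proof. by case: hH => _ _ _ []. Qed.
Lemma eps1 : eps 1 = 1. Proof. by case: hH => _ _ _ []. Qed.
Lemma cL h : \sum_(p <- cop h) eps p.1 *: p.2 = h.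
Proof. by case: hH => _ _ _ []. Qed.
Lemma cR h : \sum_(p <- cop h) eps p.2 *: p.1 = h.
Proof. by case: hH => _ _ _ []. Qed.
Lemma aL h : \sum_(p <- cop h) S p.1 * p.2 = eps h *: 1.
Proof. by case: hH => _ _ _ _ []. Qed.
Lemma aR h : \sum_(p <- cop h) p.1 * S p.2 = eps h *: 1.
Proof. by case: hH => _ _ _ _ []. Qed.

Lemma islinMl (V : lmodType k) (f : V -> H) v : islin f -> islin (fun x => f x * v).
Proof. exact: gislinMl. Qed.
Lemma islinMr (V : lmodType k) (f : V -> H) v : islin f -> islin (fun x => v * f x).
Proof. exact: gislinMr. Qed.
Lemma islin_id : islin (fun x : H => x). Proof. by []. Qed.
Lemma islinS (f : H -> H) : islin f -> islin (fun x => S (f x)).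
Proof. by move=> hf c x y; rewrite hf Slin. Qed.

Lemma S1 : S 1 = 1.
Proof.
have := aL 1; rewrite eps1 scale1r.
rewrite (@cop1 H (fun a b => S a * b)) ?mulr1 //.
apply: bil_of => y; [apply: islinMl; apply: islinS; apply: islin_id|].
apply: islinMr; apply: islin_id.
Qed.

Lemma SM x y : S (x * y) = S y * S x.
Proof.
pose F a b c a' b' c' := S (a * a') * (b * b') * (S c' * S c).
have e1 : S y * S x = \sum_(p <- cop x) \sum_(r <- cop y)
    (eps p.1 * eps r.1) *: (S r.2 * S p.2).
  rewrite -{1}(cL y) -{1}(cL x) !(lin_sum Slin) mulr_suml.
  under eq_bigr do rewrite mulr_sumr.
  rewrite exchange_big /=.
  apply: eq_bigr => p _; apply: eq_bigr => r _.
  by rewrite !(linZ Slin) -scalerAl -scalerAr scalerA mulrC.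
have e2 : forall p r : H * H, (eps p.1 * eps r.1) *: (S r.2 * S p.2) =
   \sum_(p' <- cop p.1) \sum_(r' <- cop r.1) F p'.1 p'.2 p.2 r'.1 r'.2 r.2.
  move=> p r; rewrite -epsM -[S r.2 * S p.2]mul1r scalerAl -aL mulr_suml.
  rewrite (@copM _ _ H (fun a b => S a * b * (S r.2 * S p.2))) //.
  apply: bil_of => z.
    by apply: islinMl; apply: islinMl; apply: islinS; apply: islin_id.
  by apply: islinMl; apply: islinMr; apply: islin_id.
pose phx a b c := \sum_(r <- cop y) \sum_(r' <- cop r.1) F a b c r'.1 r'.2 r.2.
have trx : trilinear_map phx.
  apply: tril_of => *; apply: islin_sum => r; apply: islin_sum => r'.
  - by apply: islinMl; apply: islinMl; apply: islinS; apply: islinMl; apply: islin_id.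
  - by apply: islinMl; apply: islinMr; apply: islinMl; apply: islin_id.
  - by apply: islinMr; apply: islinMr; apply: islinS; apply: islin_id.
have e6 : forall a b c (r : H * H),
  \sum_(r' <- cop r.2) F a b c r.1 r'.1 r'.2 = eps r.2 *: (S (a * r.1) * (b * S c)).
  move=> a b c r.
  transitivity (\sum_(r' <- cop r.2) S (a * r.1) * b * (r'.1 * S r'.2) * S c).
    by apply: eq_bigr => r' _; rewrite /F !mulrA.
  by rewrite -mulr_suml -mulr_sumr aR -scalerAr mulr1 -scalerAl !mulrA.
have e7 : forall a B, \sum_(r <- cop y) eps r.2 *: (S (a * r.1) * B) = S (a * y) * B.
  move=> a B.
  transitivity (\sum_(r <- cop y) S (a * (eps r.2 *: r.1)) * B).
    by apply: eq_bigr => r _; rewrite -scalerAr (linZ Slin) scalerAl.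
  by rewrite -mulr_suml -(lin_sum Slin) -mulr_sumr cR.
symmetry; rewrite e1.
transitivity (\sum_(p <- cop x) \sum_(p' <- cop p.1) phx p'.1 p'.2 p.2).
  apply: eq_bigr => p _.
  under eq_bigr do rewrite e2.
  by rewrite exchange_big.
rewrite (@coassoc x H phx trx).
transitivity (\sum_(p <- cop x) \sum_(p' <- cop p.2)
   \sum_(r <- cop y) eps r.2 *: (S (p.1 * r.1) * (p'.1 * S p'.2))).
  apply: eq_bigr => p _; apply: eq_bigr => p' _.
  rewrite /phx (@coassoc y H (F p.1 p'.1 p'.2)); last first.
    apply: tril_of => *.
    - by apply: islinMl; apply: islinMl; apply: islinS; apply: islinMr; apply: islin_id.
    - by apply: islinMl; apply: islinMr; apply: islinMr; apply: islin_id.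
    - by apply: islinMr; apply: islinMl; apply: islinS; apply: islin_id.
  by apply: eq_bigr => r _; rewrite e6.
transitivity (\sum_(p <- cop x) eps p.2 *: S (p.1 * y)).
  apply: eq_bigr => p _.
  under eq_bigr do rewrite e7.
  by rewrite -mulr_sumr aR -scalerAr mulr1.
transitivity (\sum_(p <- cop x) S ((eps p.2 *: p.1) * y)).
  by apply: eq_bigr => p _; rewrite -scalerAl (linZ Slin).
by rewrite -(lin_sum Slin) -mulr_suml cR.
Qed.

Variable g : H -> H.
Hypotheses (Sg : cancel S g) (gS : cancel g S).

Lemma glin : islin g.
Proof. by move=> c x y; apply: (can_inj Sg); rewrite Slin !gS. Qed.

Lemma AI h : \sum_(p <- cop h) p.2 * g p.1 = eps h *: 1.
Proof.
apply: (can_inj Sg); rewrite (lin_sum Slin) (linZ Slin) S1 -aR.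
by apply: eq_bigr => p _; rewrite SM gS.
Qed.

Section ModAlg.
Variables (A : algType k) (act : H -> A -> A).
Hypothesis hA : is_module_algebra cop eps act.

Lemma actHlin a : islin (fun h => act h a). Proof. by case: hA => h1 *; apply: h1. Qed.
Lemma actAlin h : islin (act h). Proof. by case: hA => _ h2 *; apply: h2. Qed.
Lemma act1 a : act 1 a = a. Proof. by case: hA => _ _ [h3 _]. Qed.
Lemma actMul x y a : act (x * y) a = act x (act y a). Proof. by case: hA => _ _ [_ h3]. Qed.
Lemma actM h a b : act h (a * b) = \sum_(p <- cop h) act p.1 a * act p.2 b.
Proof. by case: hA. Qed.
Lemma act_one h : act h 1 = eps h *: 1. Proof. by case: hA. Qed.
Lemma act_sumH (I : Type) (r : seq I) (F : I -> H) b :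
  act (\sum_(i <- r) F i) b = \sum_(i <- r) act (F i) b.
Proof. exact: (lin_sum (actHlin b)). Qed.
Lemma act_sumA (I : Type) (r : seq I) (F : I -> A) h :
  act h (\sum_(i <- r) F i) = \sum_(i <- r) act h (F i).
Proof. exact: (lin_sum (actAlin h)). Qed.
Lemma act_scal1 c b : act (c *: 1) b = c *: b.
Proof. by rewrite (linZ (actHlin b)) act1. Qed.
Lemma islin_actH (f : H -> H) b : islin f -> islin (fun x => act (f x) b).
Proof. by move=> hf c x y; rewrite hf (actHlin b). Qed.

Lemma actR h z b : act h z * b = \sum_(p <- cop h) act p.1 (z * act (S p.2) b).
Proof.
symmetry.
transitivity (\sum_(p <- cop h) \sum_(r <- cop p.1) act r.1 z * act (r.2 * S p.2) b).
  by apply: eq_bigr => p _; rewrite actM; apply: eq_bigr => r _; rewrite actMul.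
rewrite (@coassoc h A (fun a b' c => act a z * act (b' * S c) b)); last first.
  apply: tril_of => *.
  - by apply: gislinMl; apply: actHlin.
  - by apply: gislinMr; apply: islin_actH; apply: islinMl; apply: islin_id.
  - by apply: gislinMr; apply: islin_actH; apply: islinMr; apply: islinS; apply: islin_id.
transitivity (\sum_(p <- cop h) act (eps p.2 *: p.1) z * b).
  apply: eq_bigr => p _; rewrite -mulr_sumr -act_sumH aR act_scal1.
  by rewrite (linZ (actHlin z)) -scalerAr scalerAl.
by rewrite -mulr_suml -act_sumH cR.
Qed.

Lemma actL h b z : b * act h z = \sum_(p <- cop h) act p.2 (act (g p.1) b * z).
Proof.
symmetry.
transitivity (\sum_(p <- cop h) \sum_(r <- cop p.2) act (r.1 * g p.1) b * act r.2 z).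
  by apply: eq_bigr => p _; rewrite actM; apply: eq_bigr => r _; rewrite actMul.
rewrite -(@coassoc h A (fun a b' c => act (b' * g a) b * act c z)); last first.
  apply: tril_of => *.
  - by apply: gislinMl; apply: islin_actH; apply: islinMr; apply: glin.
  - by apply: gislinMl; apply: islin_actH; apply: islinMl; apply: islin_id.
  - by apply: gislinMr; apply: actHlin.
transitivity (\sum_(p <- cop h) b * act (eps p.1 *: p.2) z).
  apply: eq_bigr => p _; rewrite -mulr_suml -act_sumH AI act_scal1.
  by rewrite (linZ (actHlin z)) -scalerAr scalerAl.
by rewrite -mulr_sumr -act_sumH cL.
Qed.


Section Quot.
Variables (Q : algType k) (iota : {lrmorphism A -> Q}).
Hypothesis hQ : is_sym_ring_of_quotients iota.

Lemma iotaM a b : iota (a * b) = iota a * iota b. Proof. exact: rmorphM. Qed.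
Lemma iotaD a b : iota (a + b) = iota a + iota b. Proof. exact: rmorphD. Qed.
Lemma iotaB a b : iota (a - b) = iota a - iota b. Proof. exact: rmorphB. Qed.
Lemma iota0 : iota 0 = 0. Proof. exact: rmorph0. Qed.
Lemma iota1 : iota 1 = 1. Proof. exact: rmorph1. Qed.
Lemma iotaZ c a : iota (c *: a) = c *: iota a. Proof. exact: linearZ. Qed.
Lemma iota_sum (I : Type) (r : seq I) (F : I -> A) :
  iota (\sum_(i <- r) F i) = \sum_(i <- r) iota (F i).
Proof. exact: rmorph_sum. Qed.
Lemma iota_inj : injective iota. Proof. by case: hQ. Qed.
Lemma inA0 : inA iota 0. Proof. by exists 0; rewrite iota0. Qed.
Lemma inAD u v : inA iota u -> inA iota v -> inA iota (u + v).
Proof. by move=> [a <-] [b <-]; exists (a + b); rewrite iotaD. Qed.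
Lemma inA_sum (I : Type) (r : seq I) (F : I -> Q) :
  (forall i, inA iota (F i)) -> inA iota (\sum_(i <- r) F i).
Proof.
move=> hF; elim: r => [|i r IH]; first by rewrite big_nil; exact: inA0.
by rewrite big_cons; apply: inAD.
Qed.
Lemma inAMl a u : inA iota u -> inA iota (iota a * u).
Proof. by move=> [b <-]; exists (a * b); rewrite iotaM. Qed.
Lemma inAMr a u : inA iota u -> inA iota (u * iota a).
Proof. by move=> [b <-]; exists (b * a); rewrite iotaM. Qed.

Lemma dense_zeroL (I : A -> Prop) Z : dense_ideal I ->
  (forall e, I e -> iota e * Z = 0) -> Z = 0.
Proof. by case: hQ => _ _ h3 _ dI hZ; apply: (h3 Z I dI); left. Qed.
Lemma dense_zeroR (I : A -> Prop) Z : dense_ideal I ->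
  (forall e, I e -> Z * iota e = 0) -> Z = 0.
Proof. by case: hQ => _ _ h3 _ dI hZ; apply: (h3 Z I dI); right. Qed.

Lemma Dq1L q a : Dq iota q a -> exists y, iota y = iota a * q.
Proof. by move=> /(_ 1) [_ [y hy]]; exists y; rewrite hy iota1 mulr1. Qed.
Lemma Dq1R q a : Dq iota q a -> exists y, iota y = q * iota a.
Proof. by move=> /(_ 1) [[y hy] _]; exists y; rewrite hy iota1 mulr1. Qed.

Lemma Dq_ideal q : is_twosided_ideal (Dq iota q).
Proof.
split.
- by move=> b; rewrite iota0 mulr0 mul0r !mul0r; split; exact: inA0.
- move=> x y hx hy b; case: (hx b) => h1 h2; case: (hy b) => h3 h4.
  by rewrite iotaD mulrDr mulrDl mulrDl; split; apply: inAD.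
- move=> a x hx; split=> b.
  + case: (hx (b * a)) => h1 _; case: (hx b) => _ h2.
    rewrite iotaM; split; first by rewrite mulrA -(mulrA q) -iotaM.
    by rewrite -!mulrA; apply: inAMl; rewrite !mulrA.
  + case: (hx b) => h1 _; case: (hx (a * b)) => _ h2.
    rewrite iotaM; split; first by rewrite mulrA; apply: inAMr.
    by rewrite -(mulrA (iota x)) -iotaM.
Qed.

Lemma Dq_dense q : dense_ideal (Dq iota q).
Proof.
case: hQ => _ /(_ q) [I [[[I0 ID IM] lI rI] hI]] _ _.
have sub : forall x, I x -> Dq iota q x.
  move=> x Ix b; split.
    by rewrite -mulrA -iotaM; case: (hI (b * x) (proj1 (IM b x Ix))).
  by rewrite -iotaM; case: (hI (x * b) (proj2 (IM b x Ix))).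
split; first exact: Dq_ideal.
  by move=> a ha; apply: lI => x /sub; apply: ha.
by move=> a ha; apply: rI => x /sub; apply: ha.
Qed.

Lemma Dq_H q : QH iota act q -> H_stable act (Dq iota q).
Proof.
move=> hq h d hd b; have [_ _ IM] := Dq_ideal q; split.
- rewrite -mulrA -iotaM actL iota_sum mulr_sumr; apply: inA_sum => p.
  have hed : Dq iota q (act (g p.1) b * d) by apply: (proj1 (IM _ _ hd)).
  have [y hy] := @Dq1R _ _ hed.
  by exists (act p.2 y); apply: (proj2 (hq p.2 _ hed)).
- rewrite -iotaM actR iota_sum mulr_suml; apply: inA_sum => p.
  have hed : Dq iota q (d * act (S p.2) b) by apply: (proj2 (IM _ _ hd)).
  have [y hy] := @Dq1L _ _ hed.
  by exists (act p.1 y); apply: (proj1 (hq p.1 _ hed)).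
Qed.

Lemma partA q : QH iota act q -> EH act (Dq iota q).
Proof. by move=> hq; split; [apply: Dq_dense | apply: Dq_H]. Qed.

Lemma KL (K : A -> Prop) q d x h : EH act K -> iota x = iota d * q ->
  (forall e h', K e -> iota (act h' (e * x)) = iota (act h' (e * d)) * q) ->
  iota (act h x) = iota (act h d) * q.
Proof.
move=> [dK KH] hx hyp; apply/eqP; rewrite -subr_eq0; apply/eqP.
apply: (@dense_zeroL K _ dK) => e Ke.
rewrite mulrBr mulrA -!iotaM (actL h e x) (actL h e d) !iota_sum mulr_suml.
apply/eqP; rewrite subr_eq0; apply/eqP; apply: eq_bigr => p _.
by apply: hyp; apply: KH.
Qed.

Lemma KR (K : A -> Prop) q d x h : EH act K -> iota x = q * iota d ->
  (forall e h', K e -> iota (act h' (x * e)) = q * iota (act h' (d * e))) ->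
  iota (act h x) = q * iota (act h d).
Proof.
move=> [dK KH] hx hyp; apply/eqP; rewrite -subr_eq0; apply/eqP.
apply: (@dense_zeroR K _ dK) => e Ke.
rewrite mulrBl -mulrA -!iotaM (actR h x e) (actR h d e) !iota_sum mulr_sumr.
apply/eqP; rewrite subr_eq0; apply/eqP; apply: eq_bigr => p _.
by apply: hyp; apply: KH.
Qed.


Arguments partA {q}.
Arguments KL {K q d x} h.
Arguments KR {K q d x} h.

Lemma idealL (I : A -> Prop) a x : EH act I -> I x -> I (a * x).
Proof. by move=> [[[_ _ IM] _ _] _] /(IM a) []. Qed.
Lemma idealR (I : A -> Prop) a x : EH act I -> I x -> I (x * a).
Proof. by move=> [[[_ _ IM] _ _] _] /(IM a) []. Qed.

Arguments idealL {I} a {x}.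
Arguments idealR {I} a {x}.
Lemma GenL q h a x : QH iota act q -> iota x = iota a * q ->
  iota (act h x) = iota (act h a) * q.
Proof.
move=> hq hx; have EK := partA hq.
apply: (KL _ EK hx) => e h' Ke.
apply: (proj1 (hq h' _ (idealR a EK Ke))).
by rewrite !iotaM hx mulrA.
Qed.

Lemma GenR q h a x : QH iota act q -> iota x = q * iota a ->
  iota (act h x) = q * iota (act h a).
Proof.
move=> hq hx; have EK := partA hq.
apply: (KR _ EK hx) => e h' Ke.
apply: (proj2 (hq h' _ (idealL a EK Ke))).
by rewrite !iotaM hx mulrA.
Qed.

Arguments GenL {q} h {a x}.
Arguments GenR {q} h {a x}.
Lemma partB (q : Q) (I : A -> Prop) : EH act I ->
  (forall h a, I a ->
     (forall x, iota x = iota a * q -> iota (act h x) = iota (act h a) * q) /\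
     (forall x, iota x = q * iota a -> iota (act h x) = q * iota (act h a))) ->
  QH iota act q.
Proof.
move=> EI hyp h d _; split=> x hx.
- apply: (KL _ EI hx) => e h' Ke.
  apply: (proj1 (hyp h' _ (idealR d EI Ke))).
  by rewrite !iotaM hx mulrA.
- apply: (KR _ EI hx) => e h' Ke.
  apply: (proj2 (hyp h' _ (idealL d EI Ke))).
  by rewrite !iotaM hx mulrA.
Qed.

Lemma QH1 : QH iota act 1.
Proof.
move=> h d _; split=> x.
- by rewrite mulr1 => /iota_inj ->; rewrite mulr1.
- by rewrite mul1r => /iota_inj ->; rewrite mul1r.
Qed.

Lemma QHD p q : QH iota act p -> QH iota act q -> QH iota act (p + q).
Proof.
move=> hp hq h d _; have EK := partA hp; have [[_ _ IM] _ _] := Dq_dense p.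
split=> x hx.
- apply: (KL _ EK hx) => e h' Ke.
  have [y1 hy1] := @Dq1L _ _ (idealR d EK Ke).
  have hy2 : iota (e * x - y1) = iota (e * d) * q.
    by rewrite iotaB hy1 !iotaM hx mulrA mulrDr addrC addKr.
  have -> : e * x = y1 + (e * x - y1) by rewrite addrC subrK.
  by rewrite (linD (actAlin h')) iotaD (GenL h' hp hy1) (GenL h' hq hy2) mulrDr.
- apply: (KR _ EK hx) => e h' Ke.
  have [y1 hy1] := @Dq1R _ _ (idealL d EK Ke).
  have hy2 : iota (x * e - y1) = q * iota (d * e).
    by rewrite iotaB hy1 !iotaM hx -mulrA mulrDl addrC addKr.
  have -> : x * e = y1 + (x * e - y1) by rewrite addrC subrK.
  by rewrite (linD (actAlin h')) iotaD (GenR h' hp hy1) (GenR h' hq hy2) mulrDl.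
Qed.

Lemma QHM p q : QH iota act p -> QH iota act q -> QH iota act (p * q).
Proof.
move=> hp hq h d _; have EKp := partA hp; have EKq := partA hq.
split=> x hx.
- apply: (KL _ EKp hx) => e h' Ke.
  have [y hy] := @Dq1L _ _ (idealR d EKp Ke).
  have hex : iota (e * x) = iota y * q by rewrite hy !iotaM hx !mulrA.
  by rewrite (GenL h' hq hex) (GenL h' hp hy) mulrA.
- apply: (KR _ EKq hx) => e h' Ke.
  have [y hy] := @Dq1R _ _ (idealL d EKq Ke).
  have hex : iota (x * e) = p * iota y by rewrite hy !iotaM hx !mulrA.
  by rewrite (GenR h' hp hex) (GenR h' hq hy) mulrA.
Qed.

Lemma QHZ c q : QH iota act q -> QH iota act (c *: q).
Proof.
move=> hq h d _; have EK := partA hq.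
split=> x hx.
- apply: (KL _ EK hx) => e h' Ke.
  have [y hy] := @Dq1L _ _ (idealR d EK Ke).
  have -> : e * x = c *: y.
    by apply: iota_inj; rewrite iotaZ hy !iotaM hx -!scalerAr mulrA.
  by rewrite (linZ (actAlin h')) iotaZ (GenL h' hq hy) -scalerAr.
- apply: (KR _ EK hx) => e h' Ke.
  have [y hy] := @Dq1R _ _ (idealL d EK Ke).
  have -> : x * e = c *: y.
    by apply: iota_inj; rewrite iotaZ hy !iotaM hx -!scalerAl mulrA.
  by rewrite (linZ (actAlin h')) iotaZ (GenR h' hq hy) -scalerAl.
Qed.

Lemma QHinv a : invariants eps act a -> QH iota act (iota a).
Proof.
move=> ha h d _; split=> x.
- rewrite -iotaM => /iota_inj ->; rewrite -iotaM; congr (iota _).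
  rewrite actM -{2}(cR h) act_sumH mulr_suml; apply: eq_bigr => p _.
  by rewrite ha (linZ (actHlin d)) -scalerAl -scalerAr.
- rewrite -iotaM => /iota_inj ->; rewrite -iotaM; congr (iota _).
  rewrite actM -{2}(cL h) act_sumH mulr_sumr; apply: eq_bigr => p _.
  by rewrite ha (linZ (actHlin d)) -scalerAl -scalerAr.
Qed.

Lemma main_sec :
  [/\ (forall q, QH iota act q -> EH act (Dq iota q)),
      (forall (q : Q) (I : A -> Prop), EH act I ->
         (forall a, I a -> Dq iota q a) ->
         (forall h a, I a ->
            (forall x, iota x = iota a * q -> iota (act h x) = iota (act h a) * q) /\
            (forall x, iota x = q * iota a -> iota (act h x) = q * iota (act h a))) ->
         QH iota act q) &
      is_subalgebra (QH iota act) /\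
      (forall a, invariants eps act a -> QH iota act (iota a))].
Proof.
split.
- by move=> q hq; apply: partA.
- by move=> q I EI _; apply: partB.
- split; last exact: QHinv.
  split; [exact: QH1 | exact: QHD | exact: QHM | exact: QHZ].
Qed.
End Quot. End ModAlg. End Hopf.

Theorem lemma2p1 (k : fieldType) (H : algType k)
    (cop : H -> seq (H * H)) (eps : H -> k) (S : H -> H)
    (hH : is_hopf_algebra cop eps S) (hS : bijective S)
    (A : algType k) (act : H -> A -> A)
    (hA : is_module_algebra cop eps act)
    (Q : algType k) (iota : {lrmorphism A -> Q})
    (hQ : is_sym_ring_of_quotients iota) :
  [/\ (* (a) *)
      (forall q, QH iota act q -> EH act (Dq iota q)),
      (* (b) *)
      (forall (q : Q) (I : A -> Prop), EH act I ->
         (forall a, I a -> Dq iota q a) ->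
         (forall h a, I a ->
            (forall x, iota x = iota a * q -> iota (act h x) = iota (act h a) * q) /\
            (forall x, iota x = q * iota a -> iota (act h x) = q * iota (act h a))) ->
         QH iota act q) &
      (* (c) *)
      is_subalgebra (QH iota act) /\
      (forall a, invariants eps act a -> QH iota act (iota a))].
Proof.
case: hS => g Sg gS.
exact: (@main_sec k H cop eps S hH g Sg gS A act hA Q iota hQ).
Qed.
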